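(* Let $n\ge0$, $k\ge1$ and $1\le j\le k$. Then for every formula $\alpha$, $\vdash_{L_n^k}\circ^j\alpha\leftrightarrow\circ^j\neg\alpha$.
   Context: Formulas are built from a countable set of propositional variables using unary $\neg,\circ$ and binary $\land,\lor,\to$; $\circ^0\alpha=\alpha$, $\circ^{m+1}\alpha=\circ(\circ^m\alpha)$, $\alpha\leftrightarrow\beta:=(\alpha\to\beta)\land(\beta\to\alpha)$. mbC is the Hilbert calculus with the axiom schemas of a standard axiomatization of positive classical propositional logic in $\land,\lor,\to$, plus (TND) $\alpha\lor\neg\alpha$ and (bc1) $\circ\alpha\to(\alpha\to(\neg\alpha\to\beta))$, modus ponens being the only rule; mbCciw is mbC plus (ciw) $\circ\alpha\lor(\alpha\land\neg\alpha)$. For $n\ge0$, $k\ge1$, $L_n^k$ is mbCciw plus (cc$^n$) $\circ^{n+2}\alpha$, (dn) $\neg\neg\alpha\leftrightarrow\alpha$, and (ip$^j$) $\neg\circ^j\neg\alpha\leftrightarrow\neg\circ^j\alpha$ for each $1\le j<k$. $\vdash_L$ denotes derivability in $L$. *)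

(* Defs.v *)
From Stdlib Require Import Arith.

Inductive formula : Type :=
  | Var  : nat -> formula
  | Neg  : formula -> formula
  | Circ : formula -> formula
  | And  : formula -> formula -> formula
  | Or   : formula -> formula -> formula
  | Imp  : formula -> formula -> formula.

Fixpoint circ_iter (m : nat) (a : formula) : formula :=
  match m with
  | 0 => a
  | S m' => Circ (circ_iter m' a)
  end.

Definition Iff (a b : formula) : formula := And (Imp a b) (Imp b a).

Inductive cpl_pos_axiom : formula -> Prop :=
  | Ax1 a b : cpl_pos_axiom (Imp a (Imp b a))
  | Ax2 a b c : cpl_pos_axiom (Imp (Imp a b) (Imp (Imp a (Imp b c)) (Imp a c)))
  | Ax3 a b : cpl_pos_axiom (Imp a (Imp b (And a b)))
  | Ax4 a b : cpl_pos_axiom (Imp (And a b) a)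
  | Ax5 a b : cpl_pos_axiom (Imp (And a b) b)
  | Ax6 a b : cpl_pos_axiom (Imp a (Or a b))
  | Ax7 a b : cpl_pos_axiom (Imp b (Or a b))
  | Ax8 a b c : cpl_pos_axiom (Imp (Imp a c) (Imp (Imp b c) (Imp (Or a b) c)))
  | Ax9 a b : cpl_pos_axiom (Or a (Imp a b)).

Inductive mbC_axiom : formula -> Prop :=
  | mbC_pos a : cpl_pos_axiom a -> mbC_axiom a
  | mbC_TND a : mbC_axiom (Or a (Neg a))
  | mbC_bc1 a b : mbC_axiom (Imp (Circ a) (Imp a (Imp (Neg a) b))).

Inductive mbCciw_axiom : formula -> Prop :=
  | ciw_mbC a : mbC_axiom a -> mbCciw_axiom a
  | ciw_ciw a : mbCciw_axiom (Or (Circ a) (And a (Neg a))).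

Inductive Lnk_axiom (n k : nat) : formula -> Prop :=
  | Lnk_base a : mbCciw_axiom a -> Lnk_axiom n k a
  | Lnk_cc a : Lnk_axiom n k (circ_iter (n + 2) a)
  | Lnk_dn a : Lnk_axiom n k (Iff (Neg (Neg a)) a)
  | Lnk_ip j a : 1 <= j -> j < k ->
      Lnk_axiom n k (Iff (Neg (circ_iter j (Neg a))) (Neg (circ_iter j a))).

Inductive Lnk_derivable (n k : nat) : formula -> Prop :=
  | D_ax a : Lnk_axiom n k a -> Lnk_derivable n k a
  | D_mp a b : Lnk_derivable n k a -> Lnk_derivable n k (Imp a b) ->
               Lnk_derivable n k b.

(* Main.v *)
Require Import Defs.
From Stdlib Require Import List Arith Lia.
Import ListNotations.

Section S.
Variables n k : nat.

Inductive Der (G : list formula) : formula -> Prop :=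
  | Dax a : Lnk_axiom n k a -> Der G a
  | Dhyp a : In a G -> Der G a
  | Dmp a b : Der G a -> Der G (Imp a b) -> Der G b.

Lemma pos G a : cpl_pos_axiom a -> Der G a.
Proof. intro H; apply Dax, Lnk_base, ciw_mbC, mbC_pos, H. Qed.

Lemma Did G a : Der G (Imp a a).
Proof.
  eapply Dmp; [apply pos, (Ax1 a (Imp a a))|].
  eapply Dmp; [apply pos, (Ax1 a a)|].
  apply pos, Ax2.
Qed.

Lemma deduction G a b : Der (a :: G) b -> Der G (Imp a b).
Proof.
  intro H; induction H.
  - eapply Dmp; [apply Dax, H| apply pos, Ax1].
  - destruct H as [<-|H]; [apply Did|].
    eapply Dmp; [apply Dhyp, H| apply pos, Ax1].
  - eapply Dmp; [exact IHDer2|]. eapply Dmp; [exact IHDer1|]. apply pos, Ax2.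
Qed.

Lemma weaken0 G a : Der [] a -> Der G a.
Proof.
  intro H; remember [] as E; induction H.
  - apply Dax, H.
  - subst; destruct H.
  - eapply Dmp; [apply IHDer1 | apply IHDer2]; exact HeqE.
Qed.

Lemma to_L a : Der [] a -> Lnk_derivable n k a.
Proof.
  intro H; remember [] as E; induction H.
  - apply D_ax, H.
  - subst; destruct H.
  - eapply D_mp; [apply IHDer1 | apply IHDer2]; exact HeqE.
Qed.

Lemma andE1 G a b : Der G (And a b) -> Der G a.
Proof. intro H; eapply Dmp; [exact H| apply pos, Ax4]. Qed.
Lemma andE2 G a b : Der G (And a b) -> Der G b.
Proof. intro H; eapply Dmp; [exact H| apply pos, Ax5]. Qed.
Lemma andI G a b : Der G a -> Der G b -> Der G (And a b).
Proof. intros H1 H2; eapply Dmp; [exact H2|]. eapply Dmp; [exact H1| apply pos, Ax3]. Qed.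
Lemma orE G a b c : Der G (Or a b) -> Der G (Imp a c) -> Der G (Imp b c) -> Der G c.
Proof.
  intros H H1 H2; eapply Dmp; [exact H|]. eapply Dmp; [exact H2|].
  eapply Dmp; [exact H1|]. apply pos, Ax8.
Qed.

Lemma key x y : Der [] (Imp (And y (Neg y)) x) -> Der [] (Imp (And y (Neg y)) (Neg x)) ->
  Der [] (Imp (Circ x) (Circ y)).
Proof.
  intros H1 H2. apply deduction.
  eapply orE.
  - apply Dax, Lnk_base, ciw_ciw.
  - apply Did.
  - apply deduction.
    assert (Hx : Der [And y (Neg y); Circ x] x)
      by (eapply Dmp; [apply Dhyp; left; reflexivity| apply weaken0, H1]).
    assert (Hnx : Der [And y (Neg y); Circ x] (Neg x))
      by (eapply Dmp; [apply Dhyp; left; reflexivity| apply weaken0, H2]).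
    eapply Dmp; [exact Hnx|]. eapply Dmp; [exact Hx|].
    eapply Dmp; [apply Dhyp; right; left; reflexivity|].
    apply Dax, Lnk_base, ciw_mbC, mbC_bc1.
Qed.

Lemma iffI a b : Der [] (Imp a b) -> Der [] (Imp b a) -> Der [] (Iff a b).
Proof. intros; apply andI; auto. Qed.

Lemma impA_and1 y z w : Der [] (Imp y w) -> Der [] (Imp (And y z) w).
Proof.
  intro H; apply deduction. eapply Dmp; [| apply weaken0, H].
  eapply andE1; apply Dhyp; left; reflexivity.
Qed.
Lemma impA_and2 y z w : Der [] (Imp z w) -> Der [] (Imp (And y z) w).
Proof.
  intro H; apply deduction. eapply Dmp; [| apply weaken0, H].
  eapply andE2; apply Dhyp; left; reflexivity.
Qed.

Lemma main (hk : 1 <= k) a : forall m, 1 <= m -> m <= k ->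
  Der [] (Iff (circ_iter m a) (circ_iter m (Neg a))).
Proof.
  induction m as [|m IH]; intros h1 h2; [lia|].
  destruct m as [|m].
  - simpl. apply iffI.
    + apply key.
      * apply impA_and2. eapply andE1. apply Dax, Lnk_dn.
      * apply impA_and1. apply Did.
    + apply key.
      * apply impA_and2. apply Did.
      * apply impA_and1. eapply andE2. apply Dax, Lnk_dn.
  - specialize (IH ltac:(lia) ltac:(lia)).
    assert (Hip : Der [] (Iff (Neg (circ_iter (S m) (Neg a))) (Neg (circ_iter (S m) a))))
      by (apply Dax, Lnk_ip; lia).
    change (Der [] (Iff (Circ (circ_iter (S m) a)) (Circ (circ_iter (S m) (Neg a))))).
    apply iffI.
    + apply key.
      * apply impA_and1. eapply andE2. exact IH.
      * apply impA_and2. eapply andE1. exact Hip.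
    + apply key.
      * apply impA_and1. eapply andE1. exact IH.
      * apply impA_and2. eapply andE2. exact Hip.
Qed.
End S.

Theorem theorem26 (n k j : nat) (hk : 1 <= k) (hj1 : 1 <= j) (hjk : j <= k)
  (a : formula) :
  Lnk_derivable n k (Iff (circ_iter j a) (circ_iter j (Neg a))).
Proof.
  apply to_L, main; assumption.
Qed.
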